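(* Let $A$ and $B$ be rings, $f: A\to B$ a ring homomorphism and $J$ a proper ideal of $B$ such that $J\cap \mathrm{nil}(B)=(0)$. Then $A\bowtie^{f}J$ is an Armendariz ring if and only if $A$ is an Armendariz ring.
   Context: All rings are associative with identity (not necessarily commutative), ring homomorphisms are unital, and ideals are two-sided. $\mathrm{nil}(R)$ denotes the set of nilpotent elements of a ring $R$. For a ring homomorphism $f:A\to B$ and an ideal $J$ of $B$, the amalgamation is the subring $A\bowtie^{f}J=\{(a,f(a)+j)\mid a\in A,\ j\in J\}$ of $A\times B$. A ring $R$ is Armendariz if whenever $p(x)=\sum_{i=0}^n a_ix^i$ and $q(x)=\sum_{j=0}^m b_jx^j$ in $R[x]$ satisfy $p(x)q(x)=0$, then $a_ib_j=0$ for all $i,j$. *)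

(* Defs.v *)
From HB Require Import structures.
From mathcomp Require Import all_boot all_order all_algebra.
Set Implicit Arguments. Unset Strict Implicit. Unset Printing Implicit Defensive.
Import GRing.Theory.
Local Open Scope ring_scope.

Definition is_ideal (B : nzRingType) (J : {pred B}) : Prop :=
  [/\ 0 \in J,
      (forall u v, u \in J -> v \in J -> u - v \in J) &
      (forall a u, u \in J -> (a * u \in J) /\ (u * a \in J))].

Definition is_proper_ideal (B : nzRingType) (J : {pred B}) : Prop :=
  is_ideal J /\ exists b, b \notin J.

Definition nilp (B : nzRingType) (x : B) : Prop := exists n : nat, x ^+ n = 0.

Definition meets_nil_trivially (B : nzRingType) (J : {pred B}) : Prop :=
  forall x, x \in J -> nilp x -> x = 0.

Definition Armendariz (R : nzRingType) : Prop :=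
  forall p q : {poly R}, p * q = 0 -> forall i j, p`_i * q`_j = 0.

(* Armendariz property of a subring S of R: polynomials with coefficients in S
   (i.e. elements of S[x], whose multiplication is that of R[x]). *)
Definition Armendariz_sub (R : nzRingType) (S : R -> Prop) : Prop :=
  forall p q : {poly R}, (forall i, S p`_i) -> (forall i, S q`_i) ->
    p * q = 0 -> forall i j, p`_i * q`_j = 0.

Definition amalgamation (A B : nzRingType) (f : {rmorphism A -> B}) (J : {pred B})
  : (A * B)%type -> Prop :=
  fun x => exists (a : A) (j : B), j \in J /\ x = (a, f a + j).

(* Main.v *)
Require Import Defs.
From HB Require Import structures.
From mathcomp Require Import all_boot all_order all_algebra.
Local Open Scope ring_scope.
Import GRing.Theory.

Section Aux.
Variable B : nzRingType.
Variable J : {pred B}.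
Hypothesis HJ : is_ideal J.
Hypothesis Hn : meets_nil_trivially J.

Lemma sq0 x : x \in J -> x * x = 0 -> x = 0.
Proof. move=> xJ h; apply: Hn => //; exists 2%N; by rewrite expr2. Qed.

Lemma mulJl a u : u \in J -> a * u \in J.
Proof. by case: HJ => _ _ h uJ; case: (h a u uJ). Qed.
Lemma mulJr a u : u \in J -> u * a \in J.
Proof. by case: HJ => _ _ h uJ; case: (h a u uJ). Qed.

Lemma swap0 x y : x \in J -> x * y = 0 -> y * x = 0.
Proof.
move=> xJ h; apply: sq0; first exact: mulJl.
by rewrite mulrA -(mulrA y) h mulr0 mul0r.
Qed.

Lemma armJ0 (a b : nat -> B) : (forall k, a k \in J) -> (forall k, b k \in J) ->
  (forall n, \sum_(k < n.+1) a k * b (n - k)%N = 0) -> forall j, a 0%N * b j = 0.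
Proof.
move=> aJ bJ h j; elim: j {-2}j (leqnn j) => [|m IHm] j.
  rewrite leqn0 => /eqP ->; have := h 0%N; by rewrite big_ord_recl big_ord0 addr0.
move=> hj.
have IH' : forall k, (k < j)%N -> b k * a 0%N = 0.
  move=> k hk; apply: swap0 => //; apply: IHm; by rewrite -ltnS (leq_trans hk).
have := h j; rewrite big_ord_recl => /(congr1 (fun z => z * a 0%N)).
rewrite mul0r mulrDl mulr_suml big1 ?addr0.
  rewrite subn0 => e; apply: sq0; first exact: mulJr.
  by rewrite mulrA e mul0r.
move=> k _; rewrite /bump /= -mulrA IH' ?mulr0 //.
case: k => k /= hk; rewrite /bump /= add1n.
case: j {hj h IH'} hk => // j _; by rewrite subSS ltnS leq_subr.
Qed.

Lemma armJ i : forall a b : nat -> B, (forall k, a k \in J) -> (forall k, b k \in J) ->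
  (forall n, \sum_(k < n.+1) a k * b (n - k)%N = 0) -> forall j, a i * b j = 0.
Proof.
elim: i => [|i IH] a b aJ bJ h; first exact: armJ0.
apply: (IH (fun k => a k.+1)) => // n.
have := h n.+1; rewrite big_ord_recl armJ0 // add0r.
by [].
Qed.
End Aux.
Arguments mulJl {B J}.
Arguments mulJr {B J}.
Arguments armJ {B J}.

Lemma fst_sum (A B : nzRingType) n (F : 'I_n -> (A * B)%type) :
  (\sum_(k < n) F k).1 = \sum_(k < n) (F k).1.
Proof. by apply: (big_morph fst) => //. Qed.
Lemma snd_sum (A B : nzRingType) n (F : 'I_n -> (A * B)%type) :
  (\sum_(k < n) F k).2 = \sum_(k < n) (F k).2.
Proof. by apply: (big_morph snd) => //. Qed.
Lemma pair0 (A B : nzRingType) (x : (A * B)%type) : x.1 = 0 -> x.2 = 0 -> x = 0.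
Proof. by case: x => ? ? /= -> ->. Qed.

Lemma addJ {B : nzRingType} {J : {pred B}} : is_ideal J -> forall u v, u \in J -> v \in J -> u + v \in J.
Proof.
case=> J0 JB _ u v uJ vJ.
have : 0 - v \in J by apply: JB.
rewrite sub0r => nv; have := JB _ _ uJ nv; by rewrite opprK.
Qed.

Theorem theorem2p2 (A B : nzRingType) (f : {rmorphism A -> B}) (J : {pred B}) :
  is_proper_ideal J -> meets_nil_trivially J ->
  (Armendariz_sub (amalgamation f J) <-> Armendariz A).
Proof.
move=> [HJ _] Hn; split.
- move=> HS p q pq i j.
  pose P := \poly_(k < size p) ((p`_k, f p`_k) : (A * B)%type).
  pose Q := \poly_(k < size q) ((q`_k, f q`_k) : (A * B)%type).
  have cP k : P`_k = (p`_k, f p`_k).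
    rewrite coef_poly; case: ltnP => // h; by rewrite nth_default // rmorph0.
  have cQ k : Q`_k = (q`_k, f q`_k).
    rewrite coef_poly; case: ltnP => // h; by rewrite nth_default // rmorph0.
  have inS (r : {poly A}) k : amalgamation f J (r`_k, f r`_k).
    exists r`_k, 0; split; last by rewrite addr0.
    by case: HJ.
  have PQ : P * Q = 0.
    apply/polyP => n; rewrite coefM coef0; apply: pair0.
      rewrite fst_sum; under eq_bigr do rewrite cP cQ /=.
      by rewrite -coefM pq coef0.
    rewrite snd_sum; under eq_bigr do rewrite cP cQ /= -rmorphM.
    by rewrite -rmorph_sum -coefM pq coef0 rmorph0.
  have := HS P Q (fun k => eq_ind_r _ (inS p k) (cP k))
                 (fun k => eq_ind_r _ (inS q k) (cQ k)) PQ i j.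
  by rewrite cP cQ => /(congr1 fst).
- move=> HA p q Sp Sq pq i j.
  have H1 k l : (p`_k).1 * (q`_l).1 = 0.
    have := HA (map_poly fst p) (map_poly fst q).
    rewrite -rmorphM pq rmorph0 => /(_ erefl k l).
    by rewrite !coef_map.
  pose c k := (p`_k).2.
  pose d k := (q`_k).2.
  have hs n : \sum_(k < n.+1) c k * d (n - k)%N = 0.
    have := congr1 snd (congr1 (fun r : {poly (A * B)%type} => r`_n) pq).
    by rewrite /= coefM coef0 snd_sum.
  pose w := c i * d j.
  have wJ : w \in J.
    case: (Sp i) => a [ja [jaJ ea]]; case: (Sq j) => b [jb [jbJ eb]].
    have ab : a * b = 0 by have := H1 i j; rewrite ea eb.
    rewrite /w /c /d ea eb /= mulrDl !mulrDr -rmorphM ab rmorph0 add0r.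
    apply: (addJ HJ); first exact: (mulJl HJ).
    apply: (addJ HJ); [exact: (mulJr HJ) | exact: (mulJr HJ)].
  have cJ k : w * c k \in J by exact: (mulJr HJ).
  have dJ k : d k * w \in J by exact: (mulJl HJ).
  have hs' n : \sum_(k < n.+1) (w * c k) * (d (n - k)%N * w) = 0.
    under eq_bigr do rewrite mulrA -(mulrA w).
    by rewrite -mulr_suml -mulr_sumr hs mulr0 mul0r.
  have w3 : w * w * w = 0.
    by have := armJ HJ Hn i _ _ cJ dJ hs' j; rewrite mulrA -(mulrA w).
  have w0 : w = 0.
    apply: Hn => //; exists 3%N; by rewrite !exprS expr0 mulr1 mulrA.
  apply: pair0; first exact: H1.
  exact: w0.
Qed.
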